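(* Let $n_b\ge 1$, $d_l\ge 3$, $L\ge 3$, $M\ge 1$ be integers, and let $H$ be a quasi-cyclic SC-LDPC parity-check matrix with parameters $(n_b,d_l,L,M)$ and reuse $T=1$ (as defined in the context). Then, for every choice of the shift values $p_{x,y}$ satisfying the reuse-$1$ condition, the Tanner graph of $H$ contains a cycle of length $6$; in particular its girth is at most $6$.
   Context: Quasi-cyclic SC-LDPC matrix: fix integers $n_b\ge1$ (bit nodes per protograph; one check node per protograph), $d_l\ge 2$, $L\ge1$, $M\ge1$. $H$ is a binary block matrix with $L+d_l-1$ block rows (indexed $x=1,\dots,L+d_l-1$) and $n_bL$ block columns (indexed $y=1,\dots,n_bL$), each block of size $M\times M$. For a block column $y$ put $t(y)=\lceil y/n_b\rceil$. Block $(x,y)$ is the all-zero matrix unless $t(y)\le x\le t(y)+d_l-1$, in which case it equals the circulant permutation matrix $I_{(p_{x,y})}$ for a shift value $p_{x,y}\in\{0,\dots,M-1\}$; here $I_{(p)}$ is the $M\times M$ matrix whose row $r$ ($0\le r\le M-1$) has a single $1$, in column $(r+p)\bmod M$, and zeros elsewhere. Reuse-$T$ condition (periodic time-variant construction with period $T$): $p_{x+T,\,y+Tn_b}=p_{x,y}$ whenever both $(x,y)$ and $(x+T,y+Tn_b)$ are nonzero blocks of $H$; otherwise the shift values are arbitrary. The Tanner graph of $H$ is the bipartite graph with one bit node per column and one check node per row of $H$, a bit node and check node being adjacent iff the corresponding entry of $H$ is $1$. The girth is the length of a shortest cycle in the Tanner graph. *)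

(* Defs.v *)
From mathcomp Require Import all_boot.
Set Implicit Arguments. Unset Strict Implicit. Unset Printing Implicit Defensive.

(* Quasi-cyclic SC-LDPC matrix H with parameters (nb, dl, L, M) and shift
   values p : nat -> nat -> nat  (p x y = p_{x,y}, 1-based block indices).
   A check node (row of H) is a pair (x, r): block row x in 1..L+dl-1,
   row r in 0..M-1 of that block.  A bit node (column of H) is a pair (y, c):
   block column y in 1..nb*L, column c in 0..M-1 of that block. *)

Definition tcol (nb y : nat) : nat := (y + nb.-1) %/ nb.

Definition in_blocks (nb dl L x y : nat) : bool :=
  [&& 1 <= x, x <= L + dl - 1, 1 <= y & y <= nb * L].

Definition nz_block (nb dl L x y : nat) : bool :=
  in_blocks nb dl L x y && (tcol nb y <= x <= tcol nb y + dl - 1).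

Definition check_node (dl L M : nat) (v : nat * nat) : bool :=
  [&& 1 <= v.1, v.1 <= L + dl - 1 & v.2 < M].

Definition bit_node (nb L M : nat) (v : nat * nat) : bool :=
  [&& 1 <= v.1, v.1 <= nb * L & v.2 < M].

(* Entry of H at row (x,r), column (y,c): block (x,y) is I_(p x y) if nonzero,
   whose row r has its single 1 in column (r + p x y) mod M. *)
Definition Hentry (nb dl L M : nat) (p : nat -> nat -> nat)
    (row col : nat * nat) : bool :=
  nz_block nb dl L row.1 col.1 && (col.2 == (row.2 + p row.1 col.1) %% M).

Definition shifts_ok (nb dl L M : nat) (p : nat -> nat -> nat) : Prop :=
  forall x y, nz_block nb dl L x y -> p x y < M.

Definition reuse (T nb dl L : nat) (p : nat -> nat -> nat) : Prop :=
  forall x y, nz_block nb dl L x y -> nz_block nb dl L (x + T) (y + T * nb) ->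
    p (x + T) (y + T * nb) = p x y.

(* A cycle in the (bipartite) Tanner graph: distinct check nodes
   cs = [c_0;...;c_(k-1)] and distinct bit nodes bs = [b_0;...;b_(k-1)], k >= 2,
   forming c_0 - b_0 - c_1 - b_1 - ... - c_(k-1) - b_(k-1) - c_0. *)
Definition tanner_cycle (nb dl L M : nat) (p : nat -> nat -> nat)
    (cs bs : seq (nat * nat)) : Prop :=
  let k := size cs in
  [/\ size bs = k, 2 <= k, uniq cs && uniq bs,
      all (check_node dl L M) cs && all (bit_node nb L M) bs &
      forall i, i < k ->
        Hentry nb dl L M p (nth (0,0) cs i) (nth (0,0) bs i) /\
        Hentry nb dl L M p (nth (0,0) cs ((i + 1) %% k)) (nth (0,0) bs i)].

Definition cycle_length (cs : seq (nat * nat)) : nat := 2 * size cs.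

(* Main.v *)
Require Import Defs.
From mathcomp Require Import all_boot.
From mathcomp Require Import zify.

Lemma tcolk nb k : 1 <= nb -> tcol nb (k * nb + 1) = k.+1.
Proof.
move=> h; rewrite /tcol.
have -> : k * nb + 1 + nb.-1 = k.+1 * nb by rewrite mulSn; lia.
by rewrite mulnK.
Qed.

Lemma nzk nb dl L x k : 1 <= nb -> k < L -> k.+1 <= x -> x <= k + dl ->
  nz_block nb dl L x (k * nb + 1).
Proof.
move=> h1 h2 h3 h4; rewrite /nz_block tcolk //; rewrite /in_blocks.
have : k.+1 * nb <= L * nb by rewrite leq_mul2r h2 orbT.
rewrite mulSn; nia.
Qed.


Lemma cdist nb : 0 < nb -> [&& 0 * nb + 1 != 1 * nb + 1, 0 * nb + 1 != 2 * nb + 1 & 1 * nb + 1 != 2 * nb + 1].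
Proof. move=> h; rewrite !eqn_add2r !eqn_pmul2r //. Qed.

Lemma checks dl L M r1 r2 : 2 < L -> 2 < dl -> 0 < M -> r1 < M -> r2 < M ->
  all (check_node dl L M) [:: (2,0); (3,r1); (4,r2)].
Proof. move=> h0 h1 h2 h3 h4; rewrite /= /check_node /= h2 h3 h4 !andbT; apply/and3P; split; lia. Qed.

Lemma bits nb L M u v w : 0 < nb -> 2 < L -> u < M -> v < M -> w < M ->
  all (bit_node nb L M) [:: (0*nb+1,u); (2*nb+1,v); (1*nb+1,w)].
Proof.
move=> h hL hu hv hw; rewrite /= /bit_node /= hu hv hw !andbT.
have : 3 * nb <= L * nb by rewrite leq_mul2r hL orbT.
move=> *; apply/and4P; split; lia.
Qed.

Theorem lemma1 (nb dl L M : nat) (p : nat -> nat -> nat) :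
  1 <= nb -> 3 <= dl -> 3 <= L -> 1 <= M ->
  shifts_ok nb dl L M p ->
  reuse 1 nb dl L p ->
  exists cs bs : seq (nat * nat),
    tanner_cycle nb dl L M p cs bs /\ cycle_length cs = 6.
Proof.
move=> hnb hdl hL hM hs hr.
set c1 := 0 * nb + 1. set c2 := 1 * nb + 1. set c3 := 2 * nb + 1.
have nz x k : k < L -> k.+1 <= x -> x <= k + dl -> nz_block nb dl L x (k * nb + 1).
  by move=> *; apply: nzk.
have R x k : k.+1 < L -> k.+1 <= x -> x <= k + dl ->
    p (x + 1) (k.+1 * nb + 1) = p x (k * nb + 1).
  move=> h1 h2 h3.
  have -> : k.+1 * nb + 1 = k * nb + 1 + 1 * nb by rewrite mulSn; lia.
  apply: hr; first by apply: nz => //; lia.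
  have -> : k * nb + 1 + 1 * nb = k.+1 * nb + 1 by rewrite mulSn; lia.
  by apply: nz => //; lia.
set a1 := p 1 c1. set a2 := p 2 c1. set a3 := p 3 c1.
have pa1 : a1 < M by apply: hs; apply: nz => //; lia.
have pa2 : a2 < M by apply: hs; apply: nz => //; lia.
have pa3 : a3 < M by apply: hs; apply: nz => //; lia.
have e21 : p 2 c2 = a1 by apply: (R 1 0) => //; lia.
have e43 : p 4 c2 = a3 by apply: (R 3 0) => //; lia.
have e31 : p 3 c3 = a1.
  rewrite /c3 (R 2 1); try lia. exact: e21.
have e42 : p 4 c3 = a2.
  rewrite /c3 (R 3 1); try lia. by apply: (R 2 0); lia.
set r1 := (a2 + M - a3) %% M.
set r2 := (r1 + a1 + M - a2) %% M.
exists [:: (2, 0); (3, r1); (4, r2)].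
exists [:: (c1, a2); (c3, (r1 + a1) %% M); (c2, (r2 + a3) %% M)].
have n21 : nz_block nb dl L 2 c1 by apply: (nz 2 0); lia.
have n31 : nz_block nb dl L 3 c1 by apply: (nz 3 0); lia.
have n33 : nz_block nb dl L 3 c3 by apply: (nz 3 2); lia.
have n43 : nz_block nb dl L 4 c3 by apply: (nz 4 2); lia.
have n42 : nz_block nb dl L 4 c2 by apply: (nz 4 1); lia.
have n22 : nz_block nb dl L 2 c2 by apply: (nz 2 1); lia.
have r1M : r1 < M by rewrite /r1 ltn_mod.
have r2M : r2 < M by rewrite /r2 ltn_mod.
have E1 : (r1 + a3) %% M = a2.
  rewrite /r1 modnDml.
  have -> : a2 + M - a3 + a3 = a2 + 1 * M by lia.
  by rewrite [_ + _ * M]addnC modnMDl modn_small.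
have E2 : (r2 + a2) %% M = (r1 + a1) %% M.
  rewrite /r2 modnDml.
  have -> : r1 + a1 + M - a2 + a2 = r1 + a1 + 1 * M by lia.
  by rewrite [_ + _ * M]addnC modnMDl.
have E3 : (r2 + a3) %% M = a1.
  rewrite /r2 modnDml.
  have -> : r1 + a1 + M - a2 + a3 = r1 + (a1 + M - a2 + a3) by lia.
  rewrite /r1 modnDml.
  have -> : a2 + M - a3 + (a1 + M - a2 + a3) = a1 + 2 * M by lia.
  by rewrite [_ + _ * M]addnC modnMDl modn_small.
have hc : [&& c1 != c2, c1 != c3 & c2 != c3] by apply: cdist.
split; last by []. rewrite /tanner_cycle; split=> //.
- apply/andP; split.
  + by [].
  + rewrite /= !inE !xpair_eqE; case/and3P: hc => /negbTE -> /negbTE -> /negbTE h23; by rewrite [c3 == c2]eq_sym h23.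
- apply/andP; split.
  + by apply: checks.
  + by apply: bits => //; rewrite ltn_mod.
- move=> [|[|[|i]]] // _; rewrite /Hentry /=.
  + by rewrite n21 n31 add0n -/a2 modn_small // -/a3 E1 eqxx.
  + by rewrite n33 n43 e31 e42 E2 eqxx.
  + by rewrite n42 n22 e43 e21 add0n E3 (modn_small pa1) eqxx.

Qed.
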